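(* There is an absolute constant $C>0$ such that the following holds. Let $n \geq 4$ be even and let $\mathcal{G}=\{G_t : t\in\mathbb{N}\}$ be an evolving graph on node set $[n]$. Suppose there exist an increasing sequence of reals $1=h_0\leq h_1<\dots<h_s=n/2$ and a non-increasing sequence of positive reals $k_1\geq\dots\geq k_s$ such that for every $t\in\mathbb{N}$ and every $i=1,\dots,s$ the graph $G_t$ is an $(h_i,k_i)$-expander. Then the flooding time of $\mathcal{G}$ is at most $$C\sum_{i=1}^s \frac{\log(h_i/h_{i-1})}{\log(1+k_i)}.$$
   Context: Logarithms are natural. An evolving graph is a sequence $\{G_t:t\in\mathbb{N}\}$ of graphs all on the node set $[n]=\{1,\dots,n\}$. For a graph $G=([n],E)$ and $I\subseteq[n]$, $N(I)=\{v\in[n]\setminus I : \{u,v\}\in E \text{ for some } u\in I\}$. $G$ is an $(h,k)$-expander if every $I\subseteq[n]$ with $|I|\leq h$ satisfies $|N(I)|\geq k|I|$. Flooding from a source $s\in[n]$: $I_0=\{s\}$, $I_{t+1}=I_t\cup N_t(I_t)$, where $N_t$ is the out-neighborhood in $G_t$. $T(s)$ is the first $t$ with $I_t=[n]$, and the flooding time of $\mathcal{G}$ is $\max_{s\in[n]}T(s)$. *)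

(* Defs.v *)
From Stdlib Require Import Reals.
From mathcomp Require Import all_boot.
Set Implicit Arguments. Unset Strict Implicit. Unset Printing Implicit Defensive.

(* A graph on node set [n] is modelled on 'I_n by an edge relation e;
   the (undirected) edge {u,v} is present iff e u v || e v u. *)
Definition graph (n : nat) := rel 'I_n.

Definition evolving_graph (n : nat) := nat -> graph n.

Definition nbhd (n : nat) (G : graph n) (I : {set 'I_n}) : {set 'I_n} :=
  [set v | (v \notin I) && [exists u in I, G u v || G v u]].

Definition expander (n : nat) (G : graph n) (h k : R) : Prop :=
  forall I : {set 'I_n}, Rle (INR #|I|) h -> Rle (Rmult k (INR #|I|)) (INR #|nbhd G I|).

Fixpoint flood (n : nat) (G : evolving_graph n) (s : 'I_n) (t : nat) : {set 'I_n} :=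
  match t with
  | 0 => [set s]
  | t'.+1 => flood G s t' :|: nbhd (G t') (flood G s t')
  end.

Definition sumR1 (s : nat) (F : nat -> R) : R :=
  \big[Rplus/R0]_(1 <= i < s.+1) F i.

(* Main.v *)
Require Import Defs.
From Stdlib Require Import Reals.
From Stdlib Require Import Lra ZArith Classical.
From mathcomp Require Import all_boot.
From HB Require Import structures.
Set Implicit Arguments. Unset Strict Implicit.

HB.instance Definition _ := Monoid.isComLaw.Build R R0 Rplus
  (fun a b c => esym (Rplus_assoc a b c)) Rplus_comm Rplus_0_l.

Local Open Scope R_scope.

Lemma lnle (x y : R) : 0 < x -> x <= y -> ln x <= ln y.
Proof. intros Hx Hxy. destruct (Rle_lt_or_eq_dec _ _ Hxy) as [H|H].
- left; apply ln_increasing; auto.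
- subst; lra. Qed.

Definition clamp (a b x : R) := Rmax a (Rmin b x).
Definition term (h k : nat -> R) (i : nat) (x : R) :=
  (ln (clamp (h i.-1) (h i) x) - ln (h i.-1)) / ln (1 + k i).
Fixpoint Q (h k : nat -> R) (m : nat) (x : R) : R :=
  match m with 0 => 0 | m'.+1 => Q h k m' x + term h k m'.+1 x end.

Definition Hyp (s : nat) (h k : nat -> R) : Prop :=
  h O = 1 /\ h O <= h 1%N /\ (forall i, (1 <= i)%N -> (i < s)%N -> h i < h i.+1) /\
  (forall i, (1 <= i)%N -> (i <= s)%N -> 0 < k i) /\
  (forall i, (1 <= i)%N -> (i < s)%N -> k i.+1 <= k i).


Lemma hmono s h k : Hyp s h k -> forall i j, (i <= j)%N -> (j <= s)%N -> h i <= h j.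
Proof.
move=> [H0 [H01 [Hh _]]] i; elim=> [|j IH] Hij Hjs.
  by rewrite leqn0 in Hij; move/eqP: Hij => ->; lra.
rewrite leq_eqVlt in Hij; case/orP: Hij => [/eqP->|Hij]; first lra.
have := IH Hij (ltnW Hjs).
case: j {IH Hij} Hjs => [|j] Hjs Hi; first lra.
have := Hh j.+1 isT Hjs; lra.
Qed.

Lemma hge1 s h k : Hyp s h k -> forall i, (i <= s)%N -> 1 <= h i.
Proof. move=> H i Hi; have := hmono H (leq0n i) Hi; case: H => ->; lra. Qed.

Lemma kmono s h k : Hyp s h k -> forall i j, (1 <= i)%N -> (i <= j)%N -> (j <= s)%N -> k j <= k i.
Proof.
move=> [_ [_ [_ [_ Hk]]]] i; elim=> [|j IH] Hi Hij Hjs.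
  by move: Hi Hij; case: i.
rewrite leq_eqVlt in Hij; case/orP: Hij => [/eqP->|Hij]; first lra.
have := IH Hi Hij (ltnW Hjs).
have := Hk j (leq_trans Hi Hij) Hjs; lra.
Qed.

Lemma Lpos s h k : Hyp s h k -> forall i, (1 <= i)%N -> (i <= s)%N -> 0 < ln (1 + k i).
Proof.
move=> H i H1 H2; case: H => _ [_ [_ [Hk _]]]; have := Hk i H1 H2 => Hki.
rewrite -ln_1; apply ln_increasing; lra. Qed.

Lemma min_split a b z : 0 < a -> a <= b -> 0 < z ->
  ln (Rmin z b) = ln (Rmin z a) + ln (clamp a b z) - ln a.
Proof.
move=> Ha Hab Hz.
have E : Rmin z b * a = Rmin z a * clamp a b z.
  rewrite /clamp; unfold Rmin, Rmax.
  repeat (destruct Rle_dec); try ring;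
  try (assert (z = a) by lra; subst; ring);
  try (assert (z = b) by lra; subst; ring);
  try (assert (a = b) by lra; subst; ring); lra.
have P1 : 0 < Rmin z b by unfold Rmin; destruct Rle_dec; lra.
have P2 : 0 < Rmin z a by unfold Rmin; destruct Rle_dec; lra.
have P3 : 0 < clamp a b z by rewrite /clamp; unfold Rmin, Rmax; repeat destruct Rle_dec; lra.
have := f_equal ln E; rewrite !ln_mult //; lra.
Qed.

Lemma clamp_mono a b x y : a <= b -> x <= y -> clamp a b x <= clamp a b y.
Proof. rewrite /clamp; unfold Rmin, Rmax; repeat destruct Rle_dec; lra. Qed.

Lemma clamp_pos a b x : 0 < a -> 0 < clamp a b x.
Proof. rewrite /clamp; unfold Rmin, Rmax; repeat destruct Rle_dec; lra. Qed.

Lemma clamp_hi a b x : a <= b -> b <= x -> clamp a b x = b.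
Proof. move=> H1 H2; rewrite /clamp Rmin_left ?Rmax_right //; lra. Qed.

Lemma claim s h k j x y : Hyp s h k -> (1 <= j)%N -> (j <= s)%N -> h j.-1 <= x -> x <= y ->
  forall m, (m <= s)%N ->
  (ln (Rmin y (h m)) - ln (Rmin x (h m))) / ln (1 + k j) <= Q h k m y - Q h k m x.
Proof.
move=> H Hj1 Hjs Hx Hxy.
have x1 : 1 <= x by have := hge1 H (leq_trans (leq_pred j) Hjs); lra.
have Lj := Lpos H Hj1 Hjs.
elim=> [|m IH] Hm /=.
  case: (H) => -> _.
  have -> : Rmin y 1 = 1 by unfold Rmin; destruct Rle_dec; lra.
  have -> : Rmin x 1 = 1 by unfold Rmin; destruct Rle_dec; lra.
  rewrite Rminus_diag /Rdiv Rmult_0_l; lra.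
have hm1 := hge1 H (ltnW Hm).
have hmm := hmono H (leqnSn m) Hm.
have y0 : 0 < y by lra. have x0 : 0 < x by lra. have hm0 : 0 < h m by lra.
rewrite (min_split hm0 hmm y0) (min_split hm0 hmm x0).
have IH' := IH (ltnW Hm).
rewrite /term /=.
have Cm := clamp_mono hmm Hxy.
have Cx := clamp_pos (h m.+1) x (ltac:(lra) : 0 < h m).
have D0 : 0 <= ln (clamp (h m) (h m.+1) y) - ln (clamp (h m) (h m.+1) x).
  have := lnle Cx Cm; lra.
set D := ln (clamp (h m) (h m.+1) y) - ln (clamp (h m) (h m.+1) x) in D0 *.
suff : D / ln (1 + k j) <= D / ln (1 + k m.+1).
  move=> HD; rewrite /D in HD; rewrite /Rdiv in HD IH' *; lra.
case: (leqP j m.+1) => Hjm.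
- have Lm := Lpos H (ltn0Sn m) Hm.
  have kk := kmono H Hj1 Hjm Hm.
  apply Rmult_le_compat_l => //; apply Rinv_le_contravar => //.
  have km0 : 0 < k m.+1 by case: H => _ [_ [_ [Hk _]]]; apply Hk.
  apply lnle; lra.
- have Hhx : h m.+1 <= x.
    have Hle : (m.+1 <= j.-1)%N by rewrite -ltnS prednK.
    have := hmono H Hle (leq_trans (leq_pred j) Hjs); lra.
  have E1 : clamp (h m) (h m.+1) x = h m.+1 by apply clamp_hi; lra.
  have E2 : clamp (h m) (h m.+1) y = h m.+1 by apply clamp_hi; lra.
  rewrite /D E1 E2 Rminus_diag /Rdiv !Rmult_0_l; lra.
Qed.

Lemma Q1 s h k : Hyp s h k -> forall m, (m <= s)%N -> Q h k m 1 = 0.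
Proof.
move=> H; elim=> [|m IH] Hm //=.
rewrite IH ?(ltnW Hm) // /term /=.
have h1 := hge1 H (ltnW Hm).
have hmm := hmono H (leqnSn m) Hm.
have -> : clamp (h m) (h m.+1) 1 = h m.
  rewrite /clamp Rmin_right ?Rmax_left //; lra.
rewrite Rminus_diag /Rdiv Rmult_0_l; lra.
Qed.

Lemma step s h k j x y : Hyp s h k -> (1 <= j)%N -> (j <= s)%N -> h j.-1 <= x -> x <= h j ->
  (1 + k j) * x <= y -> y <= h s -> Q h k s x + 1 <= Q h k s y.
Proof.
move=> H Hj1 Hjs Hx Hxj Hy Hys.
have x1 : 1 <= x by have := hge1 H (leq_trans (leq_pred j) Hjs); lra.
have kj : 0 < k j by case: H => _ [_ [_ [Hk _]]]; apply Hk.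
have Lj := Lpos H Hj1 Hjs.
have hjs := hmono H Hjs (leqnn s).
have Hxy : x <= y by nra.
have := claim H Hj1 Hjs Hx Hxy (leqnn s).
rewrite Rmin_left ?Rmin_left; try lra.
have : ln ((1 + k j) * x) <= ln y by apply lnle; nra.
rewrite ln_mult; try lra.
move=> Hl Hc.
suff : 1 <= (ln y - ln x) / ln (1 + k j) by lra.
apply (Rmult_le_reg_r (ln (1 + k j))) => //.
rewrite /Rdiv Rmult_assoc Rinv_l; lra.
Qed.

Lemma Qbounds s h k x : Hyp s h k -> (1 <= s)%N -> 1 <= x -> x <= h s ->
  0 <= Q h k s x /\ Q h k s x <= Q h k s (h s).
Proof.
move=> H Hs x1 xs.
have L1 := Lpos H (leqnn 1) Hs.
have h0 : h 0%N = 1 by case: H.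
have hs1 := hge1 H (leqnn s).
split.
- have := claim H (leqnn 1) Hs (ltac:(rewrite /= h0; lra) : h (1.-1)%N <= 1) x1 (leqnn s).
  rewrite (Q1 H) // Rmin_left ?Rmin_left; try lra.
  rewrite ln_1 => Hc.
  have : 0 <= (ln x - 0) / ln (1 + k 1%N).
    apply Rmult_le_pos; last by left; apply Rinv_0_lt_compat.
    have := lnle (ltac:(lra) : 0 < 1) x1; rewrite ln_1; lra.
  lra.
- have := claim H (leqnn 1) Hs (ltac:(rewrite /= h0; lra) : h (1.-1)%N <= x) xs (leqnn s).
  rewrite Rmin_left ?Rmin_left; try lra.
  move=> Hc.
  have : 0 <= (ln (h s) - ln x) / ln (1 + k 1%N).
    apply Rmult_le_pos; last by left; apply Rinv_0_lt_compat.
    have := lnle (ltac:(lra) : 0 < x) xs; lra.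
  lra.
Qed.

Lemma findj s h k x : Hyp s h k -> (1 <= s)%N -> 1 <= x -> x <= h s ->
  exists j, [/\ (1 <= j)%N, (j <= s)%N, h j.-1 <= x & x <= h j].
Proof.
move=> H Hs x1.
have h0 : h 0%N = 1 by case: H.
suff: forall m, (1 <= m)%N -> (m <= s)%N -> x <= h m ->
  exists j, [/\ (1 <= j)%N, (j <= m)%N, h j.-1 <= x & x <= h j].
  move=> Hm Hxs; have [j [? ? ? ?]] := Hm s Hs (leqnn s) Hxs.
  exists j; split => //; exact: leq_trans (leqnn _) _.
elim=> [|m IH] // Hm1 Hms Hxm.
case: m IH Hm1 Hms Hxm => [|m] IH _ Hms Hxm.
  by exists 1%N; split => //=; rewrite h0.
case: (Rle_lt_dec x (h m.+1)) => Hc.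
- have [j [? ? ? ?]] := IH isT (ltnW Hms) Hc.
  by exists j; split => //; apply: leq_trans (leqnSn _).
- by exists m.+2; split => //=; lra.
Qed.
Local Close Scope R_scope.
Lemma in_nbhd n (G : graph n) I v :
  (v \in nbhd G I) = (v \notin I) && [exists u in I, G u v || G v u].
Proof. by rewrite /nbhd in_set. Qed.

Lemma card_step n (G : evolving_graph n) src t :
  #|flood G src t.+1| = #|flood G src t| + #|nbhd (G t) (flood G src t)|.
Proof.
rewrite /= cardsU.
suff -> : flood G src t :&: nbhd (G t) (flood G src t) = set0 by rewrite cards0 subn0.
apply/setP => v; rewrite in_setI in_nbhd in_set0.
by case: (v \in flood G src t).
Qed.

Lemma flood_sub n (G : evolving_graph n) src t : flood G src t \subset flood G src t.+1.
Proof. by rewrite /= subsetUl. Qed.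

Lemma flood_mono n (G : evolving_graph n) src t d : flood G src t \subset flood G src (t + d).
Proof.
elim: d => [|d IH]; first by rewrite addn0.
by apply: subset_trans IH _; rewrite addnS flood_sub.
Qed.

Lemma src_in n (G : evolving_graph n) src t : src \in flood G src t.
Proof.
have := flood_mono G src 0 t; rewrite add0n => /subsetP; apply.
by rewrite /= in_set1.
Qed.

Lemma nbhd_sub n (G : evolving_graph n) src t :
  nbhd (G t) (~: flood G src t.+1) \subset nbhd (G t) (flood G src t).
Proof.
apply/subsetP => v.
set A := flood G src t.
rewrite in_nbhd in_setC negbK /= in_setU => /andP [Hv /existsP [u /andP [Hu Hadj]]].
rewrite in_setC /= in_setU negb_or in Hu.
case/andP: Hu => HuA HuN.
case HvA : (v \in A).
  exfalso; move/negP: HuN; apply.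
  rewrite in_nbhd HuA /=; apply/existsP; exists v; rewrite HvA /=.
  by case/orP: Hadj => ->; rewrite ?orbT.
by rewrite HvA /= in Hv.
Qed.

Local Open Scope R_scope.

Lemma INR_leq a b : (a <= b)%N -> INR a <= INR b.
Proof. by move/leP; apply le_INR. Qed.
Lemma INR_ltn a b : (a < b)%N -> INR a < INR b.
Proof. by move/ltP; apply lt_INR. Qed.
Lemma INR_addn a b : INR (a + b)%N = INR a + INR b.
Proof. exact: plus_INR. Qed.
Lemma INR_mul2 a : INR (a * 2)%N = INR a * 2.
Proof. have -> : (a * 2)%N = Nat.mul a 2 by []. rewrite mult_INR /=; lra. Qed.

Lemma cardC_INR n (A : {set 'I_n}) : INR #|~: A| = INR n - INR #|A|.
Proof. have := f_equal INR (cardsC A); rewrite card_ord INR_addn; lra. Qed.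

Lemma phaseA n (G : evolving_graph n) src s h k :
  Hyp s h k -> (1 <= s)%N -> h s = INR n / 2 ->
  (forall t i, (1 <= i)%N -> (i <= s)%N -> expander (G t) (h i) (k i)) ->
  forall t, (exists t', (t' <= t)%N /\ (n <= #|flood G src t'| * 2)%N) \/
   ((#|flood G src t| * 2 < n)%N /\ INR t <= Q h k s (INR #|flood G src t|)).
Proof.
move=> H Hs Hhs Hexp; elim=> [|t IH].
  case: (leqP n (#|flood G src 0| * 2)) => Hc; first by left; exists 0%N.
  right; split => //=; rewrite cards1 /= (Q1 H) //; lra.
case: (leqP n (#|flood G src t.+1| * 2)) => Hc; first by left; exists t.+1.
case: IH => [[t' [Ht' Hb]]|[Hlt HQ]]; first by left; exists t'; split => //; apply: leq_trans Ht' _.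
right; split => //.
set x := INR #|flood G src t|.
have x1 : 1 <= x.
  have : (0 < #|flood G src t|)%N by apply/card_gt0P; exists src; apply src_in.
  by move/INR_leq; rewrite /x /=.
have xs : x <= h s by have := INR_ltn Hlt; rewrite INR_mul2 Hhs /x; lra.
have ys : INR #|flood G src t.+1| <= h s by have := INR_ltn Hc; rewrite INR_mul2 Hhs; lra.
have [j [Hj1 Hjs Hjx Hxj]] := findj H Hs x1 xs.
have He := Hexp t j Hj1 Hjs (flood G src t) Hxj.
have Hy : (1 + k j) * x <= INR #|flood G src t.+1|.
  rewrite card_step INR_addn /x; rewrite /x in He; lra.
have Hst := step H Hj1 Hjs Hjx Hxj Hy ys.
rewrite /x in Hst; rewrite S_INR; lra.
Qed.

Lemma phaseB n (G : evolving_graph n) src s h k T1 :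
  Hyp s h k -> (1 <= s)%N -> h s = INR n / 2 ->
  (forall t i, (1 <= i)%N -> (i <= s)%N -> expander (G t) (h i) (k i)) ->
  (n <= #|flood G src T1| * 2)%N ->
  forall d, flood G src (T1 + d) = [set: 'I_n] \/
   (1 <= INR #|~: flood G src (T1 + d)| /\ INR #|~: flood G src (T1 + d)| <= h s /\
    Q h k s (INR #|~: flood G src (T1 + d)|) + INR d <= Q h k s (h s)).
Proof.
move=> H Hs Hhs Hexp HT1.
have uT1 : INR #|~: flood G src T1| <= h s.
  have := INR_leq HT1; rewrite INR_mul2 cardC_INR Hhs; lra.
have ule : forall d, INR #|~: flood G src (T1 + d)| <= h s.
  move=> d; apply: Rle_trans uT1; apply INR_leq, subset_leq_card.
  by rewrite setCS flood_mono.
have nonfull : forall t, ~~ (~: flood G src t == set0) \/ flood G src t = [set: 'I_n].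
  move=> t; case: (boolP (~: flood G src t == set0)) => [/eqP E|E]; last by left.
  by right; rewrite -[flood G src t]setCK E setC0.
have ge1 : forall t, ~: flood G src t != set0 -> 1 <= INR #|~: flood G src t|.
  move=> t E; have : (0 < #|~: flood G src t|)%N by rewrite card_gt0.
  by move/INR_leq.
elim=> [|d IH].
  case: (nonfull (T1 + 0)%N) => [E|]; last by left.
  right; split; first exact: ge1.
  split; first exact: ule.
  have [_ Hb] := Qbounds H Hs (ge1 _ E) (ule 0%N); rewrite (_ : INR 0%N = 0) //; lra.
case: (nonfull (T1 + d.+1)%N) => [E|]; last by left.
right; split; first exact: ge1.
split; first exact: ule.
case: IH => [Hfull|[_ [_ IHQ]]].
  exfalso; move/negP: E; apply; apply/eqP.
  have := flood_mono G src (T1 + d) 1; rewrite Hfull addn1 -addnS.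
  rewrite subTset => /eqP ->; by rewrite setCT.
set t := (T1 + d)%N in IHQ *.
have Ht : (T1 + d.+1 = t.+1)%N by rewrite addnS.
rewrite Ht in E *.
set x := INR #|~: flood G src t.+1|.
have x1 : 1 <= x by exact: ge1.
have xs : x <= h s by rewrite /x -Ht; exact: ule.
have [j [Hj1 Hjs Hjx Hxj]] := findj H Hs x1 xs.
have He := Hexp t j Hj1 Hjs (~: flood G src t.+1) Hxj.
have Hn := INR_leq (subset_leq_card (nbhd_sub G src t)).
have Hc := card_step G src t.
have Hy : (1 + k j) * x <= INR #|~: flood G src t|.
  rewrite /x !cardC_INR Hc INR_addn; rewrite /x cardC_INR Hc INR_addn in He; lra.
have := step H Hj1 Hjs Hjx Hxj Hy (ule d).
rewrite S_INR; lra.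
Qed.

Lemma Qtop s h k : Hyp s h k -> forall m, (m <= s)%N ->
  \big[Rplus/R0]_(1 <= i < m.+1) Rdiv (ln (Rdiv (h i) (h i.-1))) (ln (Rplus R1 (k i)))
  = Q h k m (h s).
Proof.
move=> H; elim=> [|m IH] Hm.
  by rewrite big_geq.
rewrite big_nat_recr // IH ?(ltnW Hm) //= /term /=.
have h1 := hge1 H (ltnW Hm).
have hmm := hmono H (leqnSn m) Hm.
have hms := hmono H Hm (leqnn s).
rewrite clamp_hi //.
rewrite /Rdiv ln_mult ?ln_Rinv; try (apply Rinv_0_lt_compat); try lra.
by rewrite /Rminus.
Qed.

Lemma Shalf n s h k : Hyp s h k -> (1 <= s)%N -> (4 <= n)%N -> h s = INR n / 2 ->
  k 1%N <= INR n - 1 -> 1 / 2 <= Q h k s (h s).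
Proof.
move=> H Hs Hn Hhs Hk.
have n4 : 4 <= INR n by have := INR_leq Hn; simpl; lra.
have h0 : h O = 1 by case: H.
have hs1 := hge1 H (leqnn s).
have L1 := Lpos H (leqnn 1) Hs.
have := claim H (leqnn 1) Hs (ltac:(rewrite /= h0; lra) : h (1.-1)%N <= 1) hs1 (leqnn s).
rewrite (Q1 H) // Rmin_left ?Rmin_left; try lra.
rewrite ln_1 Rminus_0_r => Hc.
have a0 : 0 < ln (h s) by rewrite -ln_1; apply ln_increasing; lra.
have k1 : 0 < k 1%N by case: H => _ [_ [_ [Hk1 _]]]; apply Hk1.
have HL : ln (1 + k 1%N) <= 2 * ln (h s).
  have -> : 2 * ln (h s) = ln (h s * h s) by rewrite ln_mult; lra.
  apply lnle; nra.
suff : 1 / 2 <= ln (h s) / ln (1 + k 1%N) by lra.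
apply (Rmult_le_reg_r (ln (1 + k 1%N))) => //.
rewrite (_ : ln (h s) / ln (1 + k 1%N) * ln (1 + k 1%N) = ln (h s)); [lra | field; lra].
Qed.

Lemma k1_bound n (G : evolving_graph n) (src : 'I_n) s h k : Hyp s h k -> (1 <= s)%N ->
  (forall t i, (1 <= i)%N -> (i <= s)%N -> expander (G t) (h i) (k i)) ->
  k 1%N <= INR n - 1.
Proof.
move=> H Hs Hexp.
have h1 := hge1 H Hs.
have := Hexp 0%N 1%N (leqnn 1) Hs [set src].
rewrite cards1 /=.
move=> /(_ h1).
have Hsub : nbhd (G 0%N) [set src] \subset ~: [set src].
  apply/subsetP => v; rewrite in_nbhd in_setC => /andP [] //.
have := INR_leq (subset_leq_card Hsub).
rewrite cardC_INR cards1 /=; lra.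
Qed.

Local Close Scope R_scope.

Theorem mainTheorem1 :
  exists C : R, Rlt R0 C /\
  forall (n : nat), 4 <= n -> ~~ odd n ->
  forall (G : evolving_graph n) (s : nat) (h k : nat -> R),
    h 0 = R1 ->
    Rle (h 0) (h 1) ->
    (forall i, 1 <= i -> i < s -> Rlt (h i) (h i.+1)) ->
    h s = Rdiv (INR n) (IZR 2) ->
    (forall i, 1 <= i -> i <= s -> Rlt R0 (k i)) ->
    (forall i, 1 <= i -> i < s -> Rle (k i.+1) (k i)) ->
    (forall (t : nat) (i : nat), 1 <= i -> i <= s -> expander (G t) (h i) (k i)) ->
    forall src : 'I_n,
      exists T : nat,
        flood G src T = [set: 'I_n] /\
        Rle (INR T) (Rmult C (sumR1 s (fun i => Rdiv (ln (Rdiv (h i) (h i.-1))) (ln (Rplus R1 (k i)))))).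
Proof.
exists (IZR 6); split; first (simpl; lra).
move=> n Hn _ G s h k H0 H01 Hh Hhs Hk Hkm Hexp src.
have H : Hyp s h k by split => //; split => //.
Local Open Scope R_scope.
have Hhs' : h s = (INR n / 2) by [].
have n4 : (4 <= INR n) by have := INR_leq Hn; simpl; lra.
have Hs : (1 <= s)%N.
  case: s H Hhs Hhs' {Hh Hk Hkm Hexp} => // H _ Hhs'; exfalso.
  move: Hhs'; rewrite H0 => E. have : (1 = INR n / 2) by []. lra.
rewrite /sumR1 (Qtop H (leqnn s)).
set S := Q h k s (h s).
have Sh : (1 / 2 <= S) := Shalf H Hs Hn Hhs' (k1_bound src H Hs Hexp).
have [Hup1 Hup2] := archimed S.
have upos : (0 <= up S)%Z by apply Z.lt_le_incl, lt_0_IZR; lra.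
set N0 := Z.to_nat (up S).
have HN0 : INR N0 = IZR (up S) by rewrite INR_IZR_INZ /N0 Z2Nat.id.
have [T1 [HT1 HbT1]] : exists T1, (T1 <= N0)%N /\ (n <= #|flood G src T1| * 2)%N.
  case: (phaseA src H Hs Hhs' Hexp N0) => // [[Hlt HQ]].
  exfalso.
  have x1 : (1 <= INR #|flood G src N0|).
    have : (0 < #|flood G src N0|)%N by apply/card_gt0P; exists src; apply src_in.
    by move/INR_leq.
  have xs : (INR #|flood G src N0| <= h s).
    have := INR_ltn Hlt; rewrite INR_mul2 Hhs'; lra.
  have [_ Hb] := Qbounds H Hs x1 xs.
  rewrite -/S in Hb; lra.
exists (T1 + N0)%N.
case: (phaseB H Hs Hhs' Hexp HbT1 N0) => [Hfull|[x1 [xs HQ]]].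
  split => //.
  have := INR_leq HT1; rewrite INR_addn; lra.
exfalso.
have [Hq _] := Qbounds H Hs x1 xs.
rewrite -/S in HQ; lra.
Qed.
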